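(* Let $G$ be a finite abelian group with uniform probability measure $\mu$ and dual group $\hat G$, and let $\mathcal F = \{\mathrm{Re}\,u_\gamma, \mathrm{Im}\,u_\gamma : \gamma\in\hat G\}$. If $R$ is a degree-$d$ Riesz $\mathcal F$-product, then $\mathrm{Spec}_0(R) = \{\gamma\in\hat G : \hat R(\gamma)\neq0\}$ is $d$-covered.
   Context: For $\gamma\in\hat G$, $u_\gamma : G\to\mathbb C$ is the corresponding character (so $u_\gamma u_{\gamma'} = u_{\gamma+\gamma'}$ and $|u_\gamma|\le1$). Every $f:G\to\mathbb C$ is written $f=\sum_{\gamma\in\hat G}\hat f(\gamma)u_\gamma$. A degree-$d$ Riesz $\mathcal F$-product is a function $R(x)=\prod_{i=1}^d(1+\epsilon_i\varphi_i(x))$ with $\varphi_i\in\mathcal F$, $\epsilon_i\in\{-1,0,1\}$. A subset $S\subseteq\hat G$ is covered by $\Lambda\subseteq\hat G$ if $S\subseteq\{\sum_{\lambda\in\Lambda}\epsilon_\lambda\lambda : \epsilon_\lambda\in\{-1,0,1\}\}$ (the empty sum being the identity $0$), and $S$ is $d$-covered if it is covered by some $\Lambda\subseteq\hat G$ with $|\Lambda|\le d$. *)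

(* Defs.v *)
(* A finite abelian group G is a finZmodType (written additively);
   complex values are taken in algC (characters of a finite group take algebraic values). *)
From mathcomp Require Import all_boot all_order all_algebra all_field.
Set Implicit Arguments. Unset Strict Implicit. Unset Printing Implicit Defensive.
Import Order.TTheory GRing.Theory Num.Theory.
Local Open Scope ring_scope.

(* gamma in \hat G, identified with its character u_gamma : G -> unit circle *)
Definition is_character (G : finZmodType) (u : {ffun G -> algC}) : Prop :=
  (forall x y : G, u (x + y) = u x * u y) /\ (forall x : G, `|u x| = 1).

Definition fourier (G : finZmodType) (f : G -> algC) (u : {ffun G -> algC}) : algC :=
  (#|G|%:R)^-1 * \sum_(x : G) f x * (u x)^*.

Definition Spec0 (G : finZmodType) (f : G -> algC) (u : {ffun G -> algC}) : Prop :=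
  is_character u /\ fourier f u <> 0.

Definition in_F (G : finZmodType) (phi : G -> algC) : Prop :=
  exists u : {ffun G -> algC}, is_character u /\
    (phi = (fun x => 'Re (u x)) \/ phi = (fun x => 'Im (u x))).

Definition riesz_product (G : finZmodType) (d : nat) (eps : 'I_d -> int)
  (phi : 'I_d -> G -> algC) : G -> algC :=
  fun x => \prod_(i < d) (1 + (eps i)%:~R * phi i x).

(* The group law of \hat G: sum_{l in L} e_l * l corresponds to the character
   x |-> prod_{l in L} u_l(x)^(e_l); the empty sum is the trivial character. *)
Definition covered_by (G : finZmodType) (S : {ffun G -> algC} -> Prop)
  (L : seq {ffun G -> algC}) : Prop :=
  forall g, S g -> exists e : {ffun G -> algC} -> int,
    (forall l, l \in L -> e l \in [:: -1; 0; 1]) /\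
    g = [ffun x => \prod_(l <- L) (l x) ^ (e l)].

Definition d_covered (G : finZmodType) (d : nat) (S : {ffun G -> algC} -> Prop) : Prop :=
  exists L : seq {ffun G -> algC},
    [/\ uniq L, (size L <= d)%N, (forall l, l \in L -> is_character l) & covered_by S L].

(* Main.v *)
Require Import Defs.
From mathcomp Require Import all_boot all_order all_algebra all_field.
From mathcomp Require Import ring.
Import Order.TTheory GRing.Theory Num.Theory.
Local Open Scope ring_scope.

Section S.
Set Implicit Arguments. Unset Strict Implicit.
Variable G : finZmodType.
Implicit Types (L A B : seq {ffun G -> algC}) (f g : G -> algC).

Definition sig L f : Prop :=
  exists e : {ffun G -> algC} -> int, (forall l, l \in L -> e l \in [:: -1; 0; 1]) /\
    forall x, f x = \prod_(l <- L) (l x) ^ (e l).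

Lemma sig_ext L f g : (forall x, f x = g x) -> sig L f -> sig L g.
Proof. by move=> fg [e [He Hf]]; exists e; split=> // x; rewrite -fg. Qed.

Lemma sig_perm L L' f : perm_eq L L' -> sig L f -> sig L' f.
Proof.
move=> pL [e [He Hf]]; exists e; split.
  by move=> l; rewrite -(perm_mem pL); apply: He.
by move=> x; rewrite Hf (perm_big _ pL).
Qed.

Lemma sig_cons L a (d : {ffun G -> algC}) (c : int) : d \notin L -> sig L a ->
  c \in [:: -1; 0; 1] -> sig (d :: L) (fun x => a x * (d x) ^ c).
Proof.
move=> dL [e [He Ha]] Hc.
exists (fun l => if l == d then c else e l); split.
  move=> l; rewrite inE; case: eqP => [->|_] //= /He //.
move=> x; rewrite big_cons eqxx Ha mulrC; congr (_ * _).
apply: eq_big_seq => l lL; case: eqP => // ld; by rewrite -ld lL in dL.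
Qed.

Lemma sig_uncons L f (d : {ffun G -> algC}) : d \notin L -> sig (d :: L) f ->
  exists a (c : int), [/\ sig L a, c \in [:: -1; 0; 1] & forall x, f x = a x * (d x) ^ c].
Proof.
move=> dL [e [He Hf]].
exists (fun x => \prod_(l <- L) (l x) ^ (e l)), (e d); split.
- exists e; split=> // l lL; apply: He; by rewrite inE lL orbT.
- by apply: He; rewrite inE eqxx.
- by move=> x; rewrite Hf big_cons mulrC.
Qed.

Lemma sig_sub A B f : uniq A -> uniq B -> {subset A <= B} -> sig A f -> sig B f.
Proof.
move=> uA uB sAB [e [He Hf]].
exists (fun l => if l \in A then e l else 0); split.
  by move=> l _; case: ifP => [/He|] //.
move=> x; rewrite Hf.
rewrite [RHS](eq_bigr (fun l => if l \in A then (l x) ^ (e l) else 1)); last first.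
  by move=> l _; case: ifP => // _; rewrite expr0z.
rewrite -[RHS]big_mkcond -[RHS]big_filter.
have pf : perm_eq A [seq l <- B | l \in A].
  apply: uniq_perm => //; first exact: filter_uniq.
  by move=> l; rewrite mem_filter; case lA: (l \in A) => //=; rewrite (sAB _ lA).
by rewrite (perm_big _ pf).
Qed.

Lemma char_neq0 (u : {ffun G -> algC}) x : is_character u -> u x != 0.
Proof.
move=> [_ Hn]; apply/eqP => H; move: (Hn x); rewrite H normr0 => /eqP.
by rewrite eq_sym oner_eq0.
Qed.

Lemma sig_mul L f : (forall l, l \in L -> is_character l) -> sig L f ->
  forall x y, f (x + y) = f x * f y.
Proof.
move=> HL [e [_ Hf]] x y; rewrite !Hf -big_split /=.
apply: eq_big_seq => l lL; have [Hm _] := HL l lL.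
by rewrite Hm exprzMl // unitfE char_neq0 //; apply: HL.
Qed.


Lemma combine (e c : int) : e \in [:: -1; 0; 1] -> c \in [:: -1; 0; 1] ->
  (exists k : int, k \in [:: -1; 0; 1] /\ forall z : algC, z != 0 -> z ^ e * z ^ c = z ^ k) \/
  (exists k : int, k \in [:: -1; 0; 1] /\ forall z : algC, z != 0 -> z ^ e * z ^ c = (z * z) ^ k).
Proof.
rewrite !inE => /or3P[]/eqP-> /or3P[]/eqP->.
- by right; exists (-1); split=> // z nz; rewrite !exprN1 invfM.
- by left; exists (-1); split=> // z nz; rewrite expr0z mulr1.
- by left; exists 0; split=> // z nz; rewrite exprN1 expr1z expr0z mulVf.
- by left; exists (-1); split=> // z nz; rewrite expr0z mul1r.
- by left; exists 0; split=> // z nz; rewrite expr0z mul1r.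
- by left; exists 1; split=> // z nz; rewrite expr0z mul1r.
- by left; exists 0; split=> // z nz; rewrite exprN1 expr1z expr0z mulfV.
- by left; exists 1; split=> // z nz; rewrite expr0z mulr1.
- by right; exists 1; split=> // z nz; rewrite !expr1z.
Qed.

Lemma key n : forall L (d : {ffun G -> algC}), (size L <= n)%N -> uniq L ->
  (forall l, l \in L -> is_character l) -> is_character d ->
  exists (mu : {ffun G -> algC}) L', [/\ uniq L', (size L' <= (size L).+1)%N,
    (forall l, l \in L' -> is_character l), {subset L' <= mu :: L} &
    forall f (c : int), sig L f -> c \in [:: -1; 0; 1] -> sig L' (fun x => f x * (d x) ^ c)].
Proof.
have notin L (d : {ffun G -> algC}) : uniq L ->
  (forall l, l \in L -> is_character l) -> is_character d -> d \notin L ->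
  exists (mu : {ffun G -> algC}) L', [/\ uniq L', (size L' <= (size L).+1)%N,
    (forall l, l \in L' -> is_character l), {subset L' <= mu :: L} &
    forall f (c : int), sig L f -> c \in [:: -1; 0; 1] -> sig L' (fun x => f x * (d x) ^ c)].
  move=> uL cL cd dL; exists d, (d :: L); split => //=.
  - by rewrite dL uL.
  - by move=> l; rewrite inE => /predU1P [->|/cL].
  - by move=> f c Hf Hc; apply: sig_cons.
elim: n => [|m IH] L d sL uL cL cd; (case: (boolP (d \in L)) => dL; last exact: notin).
  by case: L sL dL {uL cL notin}.
set A := rem d L.
have pL := perm_to_rem dL.
have pL' : perm_eq (d :: A) L by rewrite perm_sym.
have sA : (size A <= m)%N by rewrite size_rem //; move: sL; case: (size L).
have uA : uniq A by apply: rem_uniq.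
have cA : forall l, l \in A -> is_character l by move=> l /mem_rem /cL.
have dA : d \notin A by rewrite mem_rem_uniqF.
have cd2 : is_character [ffun x => d x * d x].
  case: cd => Hm Hn; split=> [x y|x]; rewrite !ffunE.
    by rewrite Hm mulrACA.
  by rewrite normrM Hn mulr1.
have [mu' [A' [uA' sA' cA' subA' covA']]] := IH A _ sA uA cA cd2.
have dec : forall f (c : int), sig L f -> c \in [:: -1; 0; 1] -> exists a, sig A a /\
   ((exists k : int, k \in [:: -1; 0; 1] /\ forall x, f x * d x ^ c = a x * d x ^ k) \/
    (exists k : int, k \in [:: -1; 0; 1] /\ forall x, f x * d x ^ c = a x * [ffun x => d x * d x] x ^ k)).
  move=> f c Hf Hc.
  have [a [e [Ha He Hfa]]] := sig_uncons dA (sig_perm pL Hf).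
  exists a; split=> //.
  case: (combine He Hc) => [[k [Hk Hz]]|[k [Hk Hz]]]; [left|right]; exists k; split=> // x;
    rewrite ?ffunE Hfa -mulrA Hz //; exact: char_neq0.
have AL : {subset A <= L} by move=> l /mem_rem.
have sLp : (0 < size L)%N by case: (L) dL.
case: (eqVneq mu' d) => [Emu|Nmu].
  exists d, L; split => //.
  - by move=> l H; rewrite inE H orbT.
  move=> f c Hf Hc; have [a [Ha [[k [Hk Hx]]|[k [Hk Hx]]]]] := dec f c Hf Hc.
  + apply: sig_ext (fun x => esym (Hx x)) _.
    exact: (sig_perm pL' (sig_cons dA Ha Hk)).
  + apply: sig_ext (fun x => esym (Hx x)) _.
    apply: (sig_sub uA' uL _ (covA' a k Ha Hk)).
    by move=> l /subA'; rewrite inE Emu => /predU1P [->|/AL].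
have dA' : d \notin A'.
  apply/negP => /subA'; rewrite inE (negbTE dA) orbF => /eqP E.
  by rewrite E eqxx in Nmu.
exists mu', (d :: A'); split => //=.
- by rewrite dA' uA'.
- by move: sA'; rewrite size_rem // prednK.
- by move=> l; rewrite inE => /predU1P [->|/cA'].
- move=> l; rewrite inE => /predU1P [->|/subA']; first by rewrite inE dL orbT.
  by rewrite !inE => /orP [->|/AL ->]; rewrite ?orbT.
move=> f c Hf Hc; have [a [Ha [[k [Hk Hx]]|[k [Hk Hx]]]]] := dec f c Hf Hc.
+ apply: sig_ext (fun x => esym (Hx x)) _.
  apply: sig_cons => //.
  apply: sig_ext (covA' a 0 Ha _) => //.
  by move=> x; rewrite expr0z mulr1.
+ apply: sig_ext (fun x => esym (Hx x)) _.
  have H := sig_cons dA' (covA' a k Ha Hk) (_ : (0:int) \in [:: -1; 0; 1]).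
  apply: sig_ext (H isT) => x; by rewrite expr0z mulr1.
Qed.


Lemma lin_step L L' (u : {ffun G -> algC}) (a b : algC) :
  (forall f (c : int), sig L f -> c \in [:: -1; 0; 1] -> sig L' (fun x => f x * (u x) ^ c)) ->
  forall s : seq (algC * {ffun G -> algC}), (forall p, p \in s -> sig L p.2) ->
  exists s' : seq (algC * {ffun G -> algC}), (forall p, p \in s' -> sig L' p.2) /\
    forall x, (\sum_(p <- s) p.1 * p.2 x) * (1 + a * u x + b * (u x)^-1)
              = \sum_(p <- s') p.1 * p.2 x.
Proof.
move=> cov; elim=> [|p s IH] Hs.
  by exists [::]; split=> // x; rewrite !big_nil mul0r.
have Hs0 : forall q, q \in s -> sig L q.2 by move=> q qs; apply: Hs; rewrite inE qs orbT.
have [s' [Hs' E]] := IH Hs0.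
have Hp := Hs p (mem_head _ _).
exists ([:: (p.1, [ffun x => p.2 x * u x ^ 0]); (p.1 * a, [ffun x => p.2 x * u x ^ 1]);
          (p.1 * b, [ffun x => p.2 x * u x ^ (-1)])] ++ s'); split.
  have H c : c \in [:: -1; 0; 1] -> sig L' [ffun x => p.2 x * u x ^ c].
    move=> Hc; apply: sig_ext (cov _ c Hp Hc) => x; by rewrite ffunE.
  move=> q; rewrite mem_cat !inE => /orP [/or3P [] /eqP -> /=|/Hs' //]; exact: H.
move=> x; rewrite big_cat !big_cons big_nil mulrDl E !ffunE /=.
rewrite expr0z expr1z exprN1; ring.
Qed.

Lemma decomp (u : {ffun G -> algC}) (phi : G -> algC) (e : algC) : is_character u ->
  (phi = (fun x => 'Re (u x)) \/ phi = (fun x => 'Im (u x))) ->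
  exists a b : algC, forall x, 1 + e * phi x = 1 + a * u x + b * (u x)^-1.
Proof.
move=> [_ Hn] Hphi.
have cj x : (u x)^* = (u x)^-1 by rewrite invC_norm Hn expr1n invr1 mul1r.
case: Hphi => ->.
  exists (e / 2%:R), (e / 2%:R) => x; rewrite ReE cj; ring.
exists (- e * 'i / 2%:R), (e * 'i / 2%:R) => x; rewrite ImE cj; ring.
Qed.

Lemma Q d : forall (eps : 'I_d -> int) (phi : 'I_d -> G -> algC),
  (forall i, in_F (phi i)) -> (forall i, eps i \in [:: -1; 0; 1]) ->
  exists L, [/\ uniq L, (size L <= d)%N, (forall l, l \in L -> is_character l) &
    exists s : seq (algC * {ffun G -> algC}), (forall p, p \in s -> sig L p.2) /\
      forall x, riesz_product eps phi x = \sum_(p <- s) p.1 * p.2 x].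
Proof.
elim: d => [|d IH] eps phi HF He.
  exists [::]; split=> //; exists [:: (1, [ffun=> 1])]; split.
    move=> p; rewrite inE => /eqP -> /=; exists (fun _ => 0); split=> // x.
    by rewrite ffunE big_nil.
  by move=> x; rewrite /riesz_product big_ord0 big_cons big_nil ffunE mulr1 addr0.
have [L [uL sL cL [s [Hs HR]]]] := IH (fun i => eps (widen_ord (leqnSn d) i))
   (fun i => phi (widen_ord (leqnSn d) i)) (fun i => HF _) (fun i => He _).
have [u [cu Hphi]] := HF ord_max.
have [a [b Hab]] := decomp ((eps ord_max)%:~R) cu Hphi.
have [mu [L' [uL' sL' cL' _ cov]]] := key (leqnn (size L)) uL cL cu.
have [s' [Hs' E]] := lin_step a b cov Hs.
exists L'; split=> //.
  by apply: (leq_trans sL'); rewrite ltnS.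
exists s'; split=> // x.
by rewrite /riesz_product big_ord_recr /= -E Hab -HR.
Qed.

Lemma orth (f : G -> algC) (g : {ffun G -> algC}) : (forall x y, f (x + y) = f x * f y) ->
  is_character g -> (exists x0, f x0 != g x0) -> \sum_x f x * (g x)^* = 0.
Proof.
move=> Hf [Hg Hn] [x0 nx].
pose w x := f x * (g x)^*.
have wM x : w (x + x0) = w x * w x0 by rewrite /w Hf Hg rmorphM /= mulrACA.
have E : \sum_x w x = w x0 * \sum_x w x.
  rewrite {1}(reindex_inj (addIr x0)) /= mulr_sumr; apply: eq_bigr => x _.
  by rewrite wM mulrC.
have w1 : w x0 != 1.
  apply/eqP => W; move/eqP: nx; apply.
  have : w x0 * g x0 = g x0 by rewrite W mul1r.
  by rewrite /w -mulrA [_^* * _]mulrC -normCK Hn expr1n mulr1.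
have : (1 - w x0) * \sum_x w x = 0 by rewrite mulrBl mul1r -E subrr.
by move/eqP; rewrite mulf_eq0 subr_eq0 eq_sym (negbTE w1) => /eqP.
Qed.

End S.
Unset Implicit Arguments.

Theorem lemma3p1 (G : finZmodType) (d : nat) (eps : 'I_d -> int)
  (phi : 'I_d -> G -> algC) :
  (forall i, in_F (phi i)) ->
  (forall i, eps i \in [:: -1; 0; 1]) ->
  d_covered d (Spec0 (riesz_product eps phi)).
Proof.
move=> HF He.
have [L [uL sL cL [s [Hs HR]]]] := Q HF He.
exists L; split=> // g [cg Hfg].
have Hsig : sig L g.
  case: (boolP (has (fun p : algC * {ffun G -> algC} => [forall x, p.2 x == g x]) s))
    => [/hasP [p ps /forallP Hp] | Hn].
    by apply: sig_ext (Hs p ps) => x; apply/eqP/Hp.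
  exfalso; apply: Hfg; rewrite /fourier.
  rewrite (eq_bigr (fun x => \sum_(p <- s) p.1 * (p.2 x * (g x)^*))); last first.
    by move=> x _; rewrite HR mulr_suml; apply: eq_bigr => p _; rewrite mulrA.
  rewrite exchange_big /= big1_seq ?mulr0 // => p /andP [_ ps].
  rewrite -mulr_sumr orth ?mulr0 //.
    exact: (sig_mul cL (Hs p ps)).
  by move/hasPn: Hn => /(_ p ps) /forallPn [x0 Hx0]; exists x0.
have [e [He' Hg]] := Hsig.
by exists e; split=> //; apply/ffunP => x; rewrite ffunE Hg.
Qed.
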